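(* Every pre-Hilbert $*$-category is additive, i.e. it has finite biproducts and its unique enrichment in commutative monoids (coming from the biproducts) is an enrichment in abelian groups.
   Context: A $*$-category is a category equipped with a choice of morphism $f^*\colon Y\to X$ for each morphism $f\colon X\to Y$ such that $1^*=1$, $(gf)^*=f^*g^*$ and $(f^* )^*=f$. A morphism $f$ is an isometry (isometric) if $f^*f=1$. A kernel of $f\colon X\to Y$ is an equaliser of $f$ and the zero morphism; an isometric kernel is a kernel that is an isometry. An orthonormal biproduct of $X_1,X_2$ is a biproduct $(X,s_1,r_1,s_2,r_2)$ (so $(X,s_1,s_2)$ a coproduct, $(X,r_1,r_2)$ a product, $r_ks_k=1$, $r_ks_j=0$ for $j\neq k$) with $r_k=s_k^*$ for each $k$. A pre-Hilbert $*$-category is a $*$-category in which (R1) there is a zero object, (R2) every pair of objects has an orthonormal biproduct, (R3) every morphism has an isometric kernel, and (R4) for every object $X$ the diagonal $\Delta=\begin{bmatrix}1\\1\end{bmatrix}\colon X\to X\oplus X$ (into a chosen orthonormal biproduct) is a normal monomorphism, i.e. a kernel of some morphism. A category with finite biproducts has a unique enrichment in commutative monoids, with $f+g=\nabla(f\oplus g)\Delta$. *)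

(* Defs.v *)
Set Implicit Arguments.
Unset Strict Implicit.

Record Category := {
  Obj :> Type;
  Hom : Obj -> Obj -> Type;
  idm : forall X : Obj, Hom X X;
  comp : forall X Y Z : Obj, Hom Y Z -> Hom X Y -> Hom X Z;
  comp_idl : forall X Y (f : Hom X Y), comp (idm Y) f = f;
  comp_idr : forall X Y (f : Hom X Y), comp f (idm X) = f;
  comp_assoc : forall W X Y Z (h : Hom Y Z) (g : Hom X Y) (f : Hom W X),
      comp h (comp g f) = comp (comp h g) f
}.

Arguments idm {c} X.
Arguments Hom {c} _ _.
Arguments comp {c X Y Z} g f.

Section Notions.
Variable C : Category.

Definition is_zero_object (Z : C) : Prop :=
  (forall Y : C, exists! f : Hom (c:=C) Z Y, True) /\
  (forall X : C, exists! f : Hom (c:=C) X Z, True).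

Definition has_zero_object : Prop := exists Z : C, is_zero_object Z.

Definition is_zero_mor (X Y : C) (f : Hom (c:=C) X Y) : Prop :=
  exists (Z : C) (a : Hom (c:=C) X Z) (b : Hom (c:=C) Z Y),
    is_zero_object Z /\ f = comp b a.

Definition is_biproduct (X1 X2 B : C)
  (s1 : Hom (c:=C) X1 B) (r1 : Hom (c:=C) B X1) (s2 : Hom (c:=C) X2 B) (r2 : Hom (c:=C) B X2) : Prop :=
  (forall W (g1 : Hom (c:=C) X1 W) (g2 : Hom (c:=C) X2 W),
      exists! h : Hom (c:=C) B W, comp h s1 = g1 /\ comp h s2 = g2) /\
  (forall W (g1 : Hom (c:=C) W X1) (g2 : Hom (c:=C) W X2),
      exists! h : Hom (c:=C) W B, comp r1 h = g1 /\ comp r2 h = g2) /\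
  comp r1 s1 = idm X1 /\ comp r2 s2 = idm X2 /\
  is_zero_mor (comp r1 s2) /\ is_zero_mor (comp r2 s1).

Definition has_binary_biproducts : Prop :=
  forall X1 X2 : C, exists B s1 r1 s2 r2, @is_biproduct X1 X2 B s1 r1 s2 r2.

Definition is_kernel (X Y K : C) (f : Hom (c:=C) X Y) (k : Hom (c:=C) K X) : Prop :=
  is_zero_mor (comp f k) /\
  forall W (m : Hom (c:=C) W X), is_zero_mor (comp f m) ->
    exists! u : Hom (c:=C) W K, comp k u = m.

Definition is_normal_mono (K X : C) (k : Hom (c:=C) K X) : Prop :=
  exists (Y : C) (f : Hom (c:=C) X Y), is_kernel f k.

(* h = f + g, computed through a biproduct Y (+) Y as
   h = nabla o <f, g>, with <f,g> the product pairing and nabla the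
   codiagonal.  (This equals nabla o (f (+) g) o Delta.) *)
Definition is_sum_via (X Y : C) (f g h : Hom (c:=C) X Y) (B : C)
  (s1 : Hom (c:=C) Y B) (r1 : Hom (c:=C) B Y) (s2 : Hom (c:=C) Y B) (r2 : Hom (c:=C) B Y) : Prop :=
  forall (p : Hom (c:=C) X B) (n : Hom (c:=C) B Y),
    comp r1 p = f -> comp r2 p = g ->
    comp n s1 = idm Y -> comp n s2 = idm Y ->
    comp n p = h.

(* additive: finite biproducts, and every hom-monoid is a group, i.e. every
   morphism has an additive inverse for the biproduct-induced addition *)
Definition is_additive : Prop :=
  has_zero_object /\ has_binary_biproducts /\
  forall (X Y : C) (f : Hom (c:=C) X Y), exists g : Hom (c:=C) X Y,
    forall (z : Hom (c:=C) X Y), is_zero_mor z ->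
    forall B s1 r1 s2 r2, @is_biproduct Y Y B s1 r1 s2 r2 ->
      is_sum_via f g z s1 r1 s2 r2.

End Notions.

Record StarCategory := {
  scat :> Category;
  star : forall X Y : scat, Hom (c:=scat) X Y -> Hom (c:=scat) Y X;
  star_id : forall X : scat, star (idm X) = idm X;
  star_comp : forall X Y Z (f : Hom (c:=scat) X Y) (g : Hom (c:=scat) Y Z),
      star (comp g f) = comp (star f) (star g);
  star_invol : forall X Y (f : Hom (c:=scat) X Y), star (star f) = f
}.

Arguments star {s X Y} f.

Section PreHilbert.
Variable C : StarCategory.

Definition is_isometry (X Y : C) (f : Hom (c:=C) X Y) : Prop :=
  comp (star f) f = idm X.

Definition is_orthonormal_biproduct (X1 X2 B : C)
  (s1 : Hom (c:=C) X1 B) (r1 : Hom (c:=C) B X1) (s2 : Hom (c:=C) X2 B) (r2 : Hom (c:=C) B X2) : Prop :=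
  is_biproduct s1 r1 s2 r2 /\ r1 = star s1 /\ r2 = star s2.

Definition is_preHilbert : Prop :=
  has_zero_object C /\
  (forall X1 X2 : C, exists B s1 r1 s2 r2,
              @is_orthonormal_biproduct X1 X2 B s1 r1 s2 r2) /\
  (forall (X Y : C) (f : Hom (c:=C) X Y),
              exists (K : C) (k : Hom (c:=C) K X), is_kernel f k /\ is_isometry k) /\
  (forall X : C, exists B s1 r1 s2 r2,
              @is_orthonormal_biproduct X X B s1 r1 s2 r2 /\
              forall d : Hom (c:=C) X B, comp r1 d = idm X -> comp r2 d = idm X ->
                is_normal_mono d).

End PreHilbert.

(* Main.v *)
Require Import Defs.
From Stdlib Require Import IndefiniteDescription.

Section Semi.
Variable C : StarCategory.
Variable Z0 : C.
Hypothesis HZ : is_zero_object Z0.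
Hypothesis Hbp : has_binary_biproducts C.

Definition to0 (X : C) : Hom X Z0 :=
  proj1_sig (constructive_indefinite_description _ (proj2 HZ X)).
Definition from0 (Y : C) : Hom Z0 Y :=
  proj1_sig (constructive_indefinite_description _ (proj1 HZ Y)).

Lemma to0_uniq (X : C) (f g : Hom X Z0) : f = g.
Proof. destruct (proj2 HZ X) as [h [_ Hh]]. rewrite <- (Hh f I), (Hh g I). reflexivity. Qed.
Lemma from0_uniq (Y : C) (f g : Hom Z0 Y) : f = g.
Proof. destruct (proj1 HZ Y) as [h [_ Hh]]. rewrite <- (Hh f I), (Hh g I). reflexivity. Qed.

Definition zero (X Y : C) : Hom X Y := comp (from0 Y) (to0 X).

Lemma zero_mor_eq (X Y : C) (f : Hom X Y) : is_zero_mor f -> f = zero X Y.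
Proof.
  intros [Z [a [b [HZ' ->]]]].
  destruct (proj2 HZ' Z0) as [j _].
  assert (E : comp j (to0 Z) = idm Z).
  { destruct (proj1 HZ' Z) as [h [_ Hh]]. rewrite <- (Hh _ I), (Hh (idm Z) I). reflexivity. }
  rewrite <- (comp_idr b), <- E.
  rewrite (comp_assoc b j (to0 Z)), <- (comp_assoc (comp b j) (to0 Z) a).
  unfold zero. f_equal; first [apply from0_uniq | apply to0_uniq].
Qed.

Arguments zero_mor_eq {X Y f} _.

Lemma zero_is (X Y : C) : is_zero_mor (zero X Y).
Proof. exists Z0, (to0 X), (from0 Y). split; [exact HZ | reflexivity]. Qed.

Lemma zero_compl (X Y Z : C) (f : Hom X Y) : comp (zero Y Z) f = zero X Z.
Proof.
  apply zero_mor_eq. exists Z0, (comp (to0 Y) f), (from0 Z). split; [exact HZ|].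
  unfold zero. apply eq_sym, comp_assoc.
Qed.

Lemma zero_compr (X Y Z : C) (f : Hom Y Z) : comp f (zero X Y) = zero X Z.
Proof.
  apply zero_mor_eq. exists Z0, (to0 X), (comp f (from0 Y)). split; [exact HZ|].
  unfold zero. apply comp_assoc.
Qed.

Record BP (X1 X2 : C) := mkBP {
  bob : C; bs1 : Hom X1 bob; br1 : Hom bob X1; bs2 : Hom X2 bob; br2 : Hom bob X2;
  bok : is_biproduct bs1 br1 bs2 br2 }.
Arguments bob {X1 X2} b.
Arguments bs1 {X1 X2} b.
Arguments bs2 {X1 X2} b.
Arguments br1 {X1 X2} b.
Arguments br2 {X1 X2} b.
Arguments bok {X1 X2} b.
Arguments mkBP {X1 X2 bob bs1 br1 bs2 br2} bok.

Section B.
Variables X1 X2 : C.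
Variable b : BP X1 X2.

Lemma ext_out W (h h' : Hom (bob b) W) :
  comp h (bs1 b) = comp h' (bs1 b) -> comp h (bs2 b) = comp h' (bs2 b) -> h = h'.
Proof.
  intros E1 E2. destruct (proj1 (bok b) W (comp h (bs1 b)) (comp h (bs2 b))) as [u [_ Hu]].
  rewrite <- (Hu h (conj eq_refl eq_refl)). apply Hu. split; auto.
Qed.

Lemma ext_in W (h h' : Hom W (bob b)) :
  comp (br1 b) h = comp (br1 b) h' -> comp (br2 b) h = comp (br2 b) h' -> h = h'.
Proof.
  intros E1 E2. destruct (proj1 (proj2 (bok b)) W (comp (br1 b) h) (comp (br2 b) h)) as [u [_ Hu]].
  rewrite <- (Hu h (conj eq_refl eq_refl)). apply Hu. split; auto.
Qed.

Definition pair W (g1 : Hom W X1) (g2 : Hom W X2) : Hom W (bob b) :=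
  proj1_sig (constructive_indefinite_description _ (proj1 (proj2 (bok b)) W g1 g2)).
Definition copair W (g1 : Hom X1 W) (g2 : Hom X2 W) : Hom (bob b) W :=
  proj1_sig (constructive_indefinite_description _ (proj1 (bok b) W g1 g2)).

Lemma pair_r1 W g1 g2 : comp (br1 b) (pair W g1 g2) = g1.
Proof. unfold pair. match goal with |- context [proj1_sig ?t] => exact (proj1 (proj1 (proj2_sig t))) end. Qed.
Lemma pair_r2 W g1 g2 : comp (br2 b) (pair W g1 g2) = g2.
Proof. unfold pair. match goal with |- context [proj1_sig ?t] => exact (proj2 (proj1 (proj2_sig t))) end. Qed.
Lemma copair_s1 W g1 g2 : comp (copair W g1 g2) (bs1 b) = g1.
Proof. unfold copair. match goal with |- context [proj1_sig ?t] => exact (proj1 (proj1 (proj2_sig t))) end. Qed.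
Lemma copair_s2 W g1 g2 : comp (copair W g1 g2) (bs2 b) = g2.
Proof. unfold copair. match goal with |- context [proj1_sig ?t] => exact (proj2 (proj1 (proj2_sig t))) end. Qed.

Lemma r1s1 : comp (br1 b) (bs1 b) = idm X1.
Proof. apply (proj1 (proj2 (proj2 (bok b)))). Qed.
Lemma r2s2 : comp (br2 b) (bs2 b) = idm X2.
Proof. apply (proj1 (proj2 (proj2 (proj2 (bok b))))). Qed.
Lemma r1s2 : comp (br1 b) (bs2 b) = zero X2 X1.
Proof. apply zero_mor_eq, (proj1 (proj2 (proj2 (proj2 (proj2 (bok b)))))). Qed.
Lemma r2s1 : comp (br2 b) (bs1 b) = zero X1 X2.
Proof. apply zero_mor_eq, (proj2 (proj2 (proj2 (proj2 (proj2 (bok b)))))). Qed.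
End B.
Arguments ext_out {X1 X2} b {W} h h'.
Arguments ext_in {X1 X2} b {W} h h'.
Arguments pair {X1 X2} b W g1 g2.
Arguments copair {X1 X2} b W g1 g2.
Arguments pair_r1 {X1 X2} b W g1 g2.
Arguments pair_r2 {X1 X2} b W g1 g2.
Arguments copair_s1 {X1 X2} b W g1 g2.
Arguments copair_s2 {X1 X2} b W g1 g2.
Arguments r1s1 {X1 X2} b.
Arguments r2s2 {X1 X2} b.
Arguments r1s2 {X1 X2} b.
Arguments r2s1 {X1 X2} b.

Lemma sum_indep Y1 Y2 (b b' : BP Y1 Y2) X Z (p : Hom X (bob b)) (p' : Hom X (bob b'))
  (n : Hom (bob b) Z) (n' : Hom (bob b') Z) :
  comp (br1 b) p = comp (br1 b') p' -> comp (br2 b) p = comp (br2 b') p' ->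
  comp n (bs1 b) = comp n' (bs1 b') -> comp n (bs2 b) = comp n' (bs2 b') ->
  comp n p = comp n' p'.
Proof.
  intros E1 E2 F1 F2.
  set (phi := copair b (bob b') (bs1 b') (bs2 b')).
  assert (R1 : comp (br1 b') phi = br1 b).
  { apply ext_out.
    - rewrite <- comp_assoc; unfold phi; rewrite copair_s1, r1s1, r1s1. reflexivity.
    - rewrite <- comp_assoc; unfold phi; rewrite copair_s2, r1s2, r1s2. reflexivity. }
  assert (R2 : comp (br2 b') phi = br2 b).
  { apply ext_out.
    - rewrite <- comp_assoc; unfold phi; rewrite copair_s1, r2s1, r2s1. reflexivity.
    - rewrite <- comp_assoc; unfold phi; rewrite copair_s2, r2s2, r2s2. reflexivity. }
  assert (P : comp phi p = p').
  { apply ext_in; rewrite comp_assoc; [rewrite R1 | rewrite R2]; assumption. }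
  assert (N : comp n' phi = n).
  { apply ext_out; rewrite <- comp_assoc; unfold phi;
    [rewrite copair_s1 | rewrite copair_s2]; symmetry; assumption. }
  rewrite <- P, comp_assoc, N. reflexivity.
Qed.

Definition bpf (X1 X2 : C) : BP X1 X2.
Proof.
  assert (E : exists b : BP X1 X2, True).
  { destruct (Hbp X1 X2) as [B [s1 [r1 [s2 [r2 H]]]]]. exists (mkBP H). exact I. }
  exact (proj1_sig (constructive_indefinite_description _ E)).
Defined.

Definition plus (X Y : C) (f g : Hom X Y) : Hom X Y :=
  comp (copair (bpf Y Y) Y (idm Y) (idm Y)) (pair (bpf Y Y) X f g).
Definition plusd (X Y : C) (f g : Hom X Y) : Hom X Y :=
  comp (copair (bpf X X) Y f g) (pair (bpf X X) X (idm X) (idm X)).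
Arguments plus {X Y} f g.
Arguments plusd {X Y} f g.

Lemma plus_via X Y (b : BP Y Y) (f g : Hom X Y) p n :
  comp (br1 b) p = f -> comp (br2 b) p = g ->
  comp n (bs1 b) = idm Y -> comp n (bs2 b) = idm Y -> comp n p = plus f g.
Proof.
  intros. unfold plus. apply sum_indep.
  - rewrite pair_r1; assumption.
  - rewrite pair_r2; assumption.
  - rewrite copair_s1; assumption.
  - rewrite copair_s2; assumption.
Qed.

Arguments plus_via {X Y} b {f g} p n.

Lemma plus_0r X Y (f : Hom X Y) : plus f (zero X Y) = f.
Proof.
  set (b := bpf Y Y).
  rewrite <- (plus_via b (comp (bs1 b) f) (copair b Y (idm Y) (idm Y))).
  - rewrite comp_assoc, copair_s1, comp_idl. reflexivity.
  - rewrite comp_assoc, r1s1, comp_idl. reflexivity.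
  - rewrite comp_assoc, r2s1, zero_compl. reflexivity.
  - apply copair_s1.
  - apply copair_s2.
Qed.

Lemma plus_0l X Y (f : Hom X Y) : plus (zero X Y) f = f.
Proof.
  set (b := bpf Y Y).
  rewrite <- (plus_via b (comp (bs2 b) f) (copair b Y (idm Y) (idm Y))).
  - rewrite comp_assoc, copair_s2, comp_idl. reflexivity.
  - rewrite comp_assoc, r1s2, zero_compl. reflexivity.
  - rewrite comp_assoc, r2s2, comp_idl. reflexivity.
  - apply copair_s1.
  - apply copair_s2.
Qed.

Lemma plusd_0r X Y (f : Hom X Y) : plusd f (zero X Y) = f.
Proof.
  unfold plusd. set (b := bpf X X).
  assert (E : copair b Y f (zero X Y) = comp f (br1 b)).
  { apply ext_out.
    - rewrite copair_s1, <- comp_assoc, r1s1, comp_idr. reflexivity.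
    - rewrite copair_s2, <- comp_assoc, r1s2, zero_compr. reflexivity. }
  rewrite E, <- comp_assoc, pair_r1, comp_idr. reflexivity.
Qed.

Lemma plusd_0l X Y (f : Hom X Y) : plusd (zero X Y) f = f.
Proof.
  unfold plusd. set (b := bpf X X).
  assert (E : copair b Y (zero X Y) f = comp f (br2 b)).
  { apply ext_out.
    - rewrite copair_s1, <- comp_assoc, r2s1, zero_compr. reflexivity.
    - rewrite copair_s2, <- comp_assoc, r2s2, comp_idr. reflexivity. }
  rewrite E, <- comp_assoc, pair_r2, comp_idr. reflexivity.
Qed.

Lemma interchange X Y (a b c d : Hom X Y) :
  plusd (plus a b) (plus c d) = plus (plusd a c) (plusd b d).
Proof.
  unfold plus, plusd.
  set (bY := bpf Y Y). set (bX := bpf X X).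
  set (nab := copair bY Y (idm Y) (idm Y)).
  set (dX := pair bX X (idm X) (idm X)).
  set (M := copair bX (bob bY) (pair bY X a b) (pair bY X c d)).
  assert (E1 : copair bX Y (comp nab (pair bY X a b)) (comp nab (pair bY X c d)) = comp nab M).
  { apply ext_out; rewrite <- comp_assoc; unfold M;
      [rewrite copair_s1, copair_s1 | rewrite copair_s2, copair_s2]; reflexivity. }
  assert (E2 : pair bY X (comp (copair bX Y a c) dX) (comp (copair bX Y b d) dX) = comp M dX).
  { apply ext_in; rewrite pair_r1 || rewrite pair_r2; rewrite comp_assoc; f_equal;
    apply ext_out; rewrite <- comp_assoc; unfold M;
    first [rewrite copair_s1, copair_s1 | rewrite copair_s2, copair_s2];
    first [rewrite pair_r1 | rewrite pair_r2]; reflexivity. }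
  rewrite E1, E2. apply eq_sym, comp_assoc.
Qed.

Arguments interchange {X Y} a b c d.

Lemma plus_plusd X Y (x y : Hom X Y) : plus x y = plusd x y.
Proof.
  pose proof (interchange x (zero X Y) (zero X Y) y) as E.
  rewrite plus_0r, plus_0l, plusd_0r, plusd_0l in E. symmetry; exact E.
Qed.

Lemma plus_assoc X Y (x y z : Hom X Y) : plus (plus x y) z = plus x (plus y z).
Proof.
  pose proof (interchange x (zero X Y) y z) as E.
  rewrite plus_0r, plusd_0l in E. rewrite <- !plus_plusd in E. symmetry; exact E.
Qed.

Lemma plus_compr X Y W (f g : Hom X Y) (m : Hom W X) :
  comp (plus f g) m = plus (comp f m) (comp g m).
Proof.
  unfold plus at 1. rewrite <- comp_assoc. apply plus_via.
  - rewrite comp_assoc, pair_r1; reflexivity.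
  - rewrite comp_assoc, pair_r2; reflexivity.
  - apply copair_s1.
  - apply copair_s2.
Qed.

Lemma plus_compl X Y W (f g : Hom X Y) (h : Hom Y W) :
  comp h (plus f g) = plus (comp h f) (comp h g).
Proof.
  rewrite !plus_plusd. unfold plusd. rewrite comp_assoc. f_equal.
  apply ext_out; rewrite <- comp_assoc;
    [rewrite !copair_s1 | rewrite !copair_s2]; reflexivity.
Qed.


Hypothesis HR3 : forall (X Y : C) (f : Hom X Y),
  exists (K : C) (k : Hom K X), is_kernel f k /\ is_isometry k.
Hypothesis HR4 : forall X : C, exists B s1 r1 s2 r2,
  @is_orthonormal_biproduct C X X B s1 r1 s2 r2 /\
  forall d : Hom X B, comp r1 d = idm X -> comp r2 d = idm X -> is_normal_mono d.

Lemma star_zero (X Y : C) : star (zero X Y) = zero Y X.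
Proof.
  apply zero_mor_eq. unfold zero. rewrite star_comp.
  exists Z0, (star (from0 Y)), (star (to0 X)). split; [exact HZ | reflexivity].
Qed.

Lemma main_inv_b (X : C) (b : BP X X) (Hr1 : br1 b = star (bs1 b)) (Hr2 : br2 b = star (bs2 b))
  (Hnorm : forall d : Hom X (bob b), comp (br1 b) d = idm X -> comp (br2 b) d = idm X -> is_normal_mono d) :
  exists g : Hom X X, plus (idm X) g = zero X X.
Proof.
  set (D := pair b X (idm X) (idm X)).
  set (N := copair b X (idm X) (idm X)).
  assert (HND : N = star D).
  { apply (ext_out b).
    - unfold N; rewrite copair_s1.
      rewrite <- (star_invol (bs1 b)), <- star_comp, <- Hr1. unfold D; rewrite pair_r1, star_id. reflexivity.
    - unfold N; rewrite copair_s2.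
      rewrite <- (star_invol (bs2 b)), <- star_comp, <- Hr2. unfold D; rewrite pair_r2, star_id. reflexivity. }
  destruct (Hnorm D (pair_r1 b X _ _) (pair_r2 b X _ _)) as [Y' [q [HqD Hquniv]]].
  destruct (HR3 _ _ N) as [K [k [[Hk0 Hkuniv] Hiso]]].
  unfold is_isometry in Hiso.
  assert (HNk : comp N k = zero K X) by (apply zero_mor_eq; exact Hk0).
  assert (FA : forall W (m : Hom W (bob b)), comp (star k) m = zero W K ->
                 exists x, comp D x = m).
  { intros W m Hm.
    assert (Hq : exists u, comp k u = star q).
    { destruct (Hkuniv _ (star q)) as [u [Hu _]].
      - rewrite HND, <- star_comp, (zero_mor_eq HqD), star_zero. apply zero_is.
      - exists u; exact Hu. }
    destruct Hq as [u Hu].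
    assert (Hqm : is_zero_mor (comp q m)).
    { rewrite <- (star_invol q), <- Hu, star_comp, <- comp_assoc, Hm, zero_compr. apply zero_is. }
    destruct (Hquniv W m Hqm) as [x [Hx _]]. exists x; exact Hx. }
  assert (Kmono : forall W (u v : Hom W K), comp k u = comp k v -> u = v).
  { intros W u v E. rewrite <- (comp_idl u), <- (comp_idl v), <- Hiso, <- !comp_assoc, E. reflexivity. }
  set (sg := pair b (bob b) (br2 b) (br1 b)).
  assert (Hsg1 : comp sg (bs1 b) = bs2 b).
  { apply (ext_in b); rewrite comp_assoc; unfold sg;
      [rewrite pair_r1, r2s1, r1s2 | rewrite pair_r2, r1s1, r2s2]; reflexivity. }
  assert (Hsg2 : comp sg (bs2 b) = bs1 b).
  { apply (ext_in b); rewrite comp_assoc; unfold sg;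
      [rewrite pair_r1, r2s2, r1s1 | rewrite pair_r2, r1s2, r2s1]; reflexivity. }
  assert (HNsg : comp N sg = N).
  { apply (ext_out b); rewrite <- comp_assoc; [rewrite Hsg1 | rewrite Hsg2]; unfold N;
      rewrite ?copair_s1, ?copair_s2; reflexivity. }
  assert (Htau : exists tau, comp k tau = comp sg k).
  { destruct (Hkuniv _ (comp sg k)) as [t [Ht _]].
    - rewrite comp_assoc, HNsg, HNk. apply zero_is.
    - exists t; exact Ht. }
  destruct Htau as [tau Htau].
  assert (H1sg : plus (idm (bob b)) sg = comp D N).
  { apply (ext_in b); apply (ext_out b);
    rewrite <- !comp_assoc, plus_compr, plus_compl, comp_idl;
    rewrite ?Hsg1, ?Hsg2;
    unfold D, N;
    rewrite ?(comp_assoc (br1 b)), ?(comp_assoc (br2 b)), ?pair_r1, ?pair_r2, ?copair_s1, ?copair_s2,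
      ?comp_idl, ?r1s1, ?r1s2, ?r2s1, ?r2s2, ?plus_0r, ?plus_0l; reflexivity. }
  assert (Ht0 : plus (idm K) tau = zero K K).
  { apply Kmono. rewrite plus_compl, comp_idr, Htau, zero_compr.
    rewrite <- (comp_idl k) at 1. rewrite <- plus_compr, H1sg, <- comp_assoc, HNk, zero_compr.
    reflexivity. }
  assert (Hv : forall W (v : Hom W K), plus v (comp tau v) = zero W K).
  { intros W v. rewrite <- (comp_idl v) at 1. rewrite <- plus_compr, Ht0, zero_compl. reflexivity. }
  set (e := comp tau (comp (star k) (bs1 b))).
  set (m := plus (bs1 b) (comp k e)).
  assert (Hm : comp (star k) m = zero X K).
  { unfold m, e. rewrite plus_compl, (comp_assoc (star k) k), Hiso, comp_idl. apply Hv. }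
  destruct (FA _ m Hm) as [x Hx].
  assert (E1 : comp (br1 b) m = x).
  { rewrite <- Hx, comp_assoc. unfold D; rewrite pair_r1, comp_idl. reflexivity. }
  assert (E2 : comp (br2 b) m = x).
  { rewrite <- Hx, comp_assoc. unfold D; rewrite pair_r2, comp_idl. reflexivity. }
  unfold m in E1, E2. rewrite plus_compl, r1s1 in E1. rewrite plus_compl, r2s1, plus_0l in E2.
  exists (plus (comp (br1 b) (comp k e)) (comp (br2 b) (comp k (comp tau e)))).
  rewrite <- plus_assoc, E1, <- E2.
  rewrite <- !plus_compl, Hv, !zero_compr. reflexivity.
Qed.

Arguments main_inv_b {X} b Hr1 Hr2 Hnorm.

Lemma main_inv (X : C) : exists g : Hom X X, plus (idm X) g = zero X X.
Proof.
  destruct (HR4 X) as [B [s1 [r1 [s2 [r2 [[Hbip [Hr1 Hr2]] Hnorm]]]]]].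
  exact (main_inv_b (mkBP Hbip) Hr1 Hr2 Hnorm).
Qed.

Lemma additive_in : is_additive C.
Proof.
  split; [exists Z0; exact HZ|]. split; [exact Hbp|].
  intros X Y f. destruct (main_inv X) as [g Hg]. exists (comp f g).
  intros z Hz B s1 r1 s2 r2 Hb p n Hp1 Hp2 Hn1 Hn2.
  transitivity (plus f (comp f g)); [exact (plus_via (mkBP Hb) p n Hp1 Hp2 Hn1 Hn2)|].
  rewrite <- (comp_idr f) at 1. rewrite <- plus_compl, Hg, zero_compr.
  symmetry; apply zero_mor_eq; exact Hz.
Qed.

End Semi.

Theorem proposition3p2 (C : StarCategory) :
  is_preHilbert C -> is_additive C.
Proof.
  intros [[Z0 HZ] [HR2 [HR3 HR4]]].
  assert (Hbp : has_binary_biproducts C).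
  { intros X1 X2. destruct (HR2 X1 X2) as [B [s1 [r1 [s2 [r2 [H _]]]]]].
    exists B, s1, r1, s2, r2; exact H. }
  exact (additive_in C Z0 HZ Hbp HR3 HR4).
Qed.
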